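(* For every integer $k\ge2$ and $\varepsilon>0$ there is $\delta=\delta(\varepsilon,k,\Omega)>0$ such that for all sufficiently large $n$ the following holds. Let $\mu\in\mathcal P(\Omega^n)$ be $\delta$-regular with respect to a partition $\vec V=(V_1,\dots,V_m)$ of $[n]$ and set $\bar\mu_i=\langle\boldsymbol\sigma[\cdot|V_i]\rangle_\mu\in\mathcal P(\Omega)$ for $i\in[m]$. If $\sum_{i\in[m]}\frac{|V_i|}{n}\langle\|\boldsymbol\sigma[\cdot|V_i]-\bar\mu_i\|_{TV}\rangle_\mu<\delta$, then $\mu$ is $(\varepsilon,k)$-symmetric.
   Context: $\Omega$ is a fixed finite nonempty set, $\mathcal P(\mathcal X)$ the set of probability measures on a finite set $\mathcal X$, $\|\cdot\|_{TV}$ total variation. For $\sigma\in\Omega^n$, nonempty $S\subset[n]$ and $\omega\in\Omega$, $\sigma[\omega|S]=|\sigma^{-1}(\omega)\cap S|/|S|$; $\langle X(\boldsymbol\sigma)\rangle_\mu=\sum_\sigma\mu(\sigma)X(\sigma)$ (applied coordinatewise to vector-valued $X$). $\mu$ is $\delta$-regular on $U\subset[n]$ if for every $S\subset U$ with $|S|\ge\delta|U|$, $\langle\|\boldsymbol\sigma[\cdot|S]-\boldsymbol\sigma[\cdot|U]\|_{TV}\rangle_\mu<\delta$; $\mu$ is $\delta$-regular with respect to $\vec V$ if there is $J\subset[m]$ with $\sum_{i\notin J}|V_i|<\delta n$ such that $\mu$ is $\delta$-regular on $V_i$ for all $i\in J$. For $x_1,\dots,x_k\in[n]$ let $\mu_{\downarrow\{x_1,\dots,x_k\}}$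 be the joint law of $(\boldsymbol\sigma(x_1),\dots,\boldsymbol\sigma(x_k))$ and $\mu_{\downarrow x}$ the law of $\boldsymbol\sigma(x)$, $\boldsymbol\sigma\sim\mu$. $\mu$ is $(\varepsilon,k)$-symmetric if $\frac1{n^k}\sum_{x_1,\dots,x_k\in[n]}\|\mu_{\downarrow\{x_1,\dots,x_k\}}-\mu_{\downarrow x_1}\otimes\cdots\otimes\mu_{\downarrow x_k}\|_{TV}<\varepsilon$. *)

(* Defs.v *)
From HB Require Import structures.
From mathcomp Require Import all_boot all_order all_algebra.
From mathcomp Require Import reals.
Set Implicit Arguments. Unset Strict Implicit. Unset Printing Implicit Defensive.
Import Order.TTheory GRing.Theory Num.Theory.
Local Open Scope ring_scope.

Section Defs.
Variables (R : realType) (Omega : finType).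

Definition config (n : nat) := {ffun 'I_n -> Omega}.

Definition is_prob (T : finType) (mu : T -> R) : Prop :=
  (forall x, 0 <= mu x) /\ \sum_(x : T) mu x = 1.

Definition tv (T : finType) (p q : T -> R) : R :=
  2^-1 * \sum_(x : T) `|p x - q x|.

Definition expect (T : finType) (mu : T -> R) (X : T -> R) : R :=
  \sum_(s : T) mu s * X s.

Definition sfrac n (s : config n) (S : {set 'I_n}) (w : Omega) : R :=
  #|[set x in S | s x == w]|%:R / #|S|%:R.

Definition regular_on n (mu : config n -> R) (delta : R) (U : {set 'I_n}) :=
  forall S : {set 'I_n}, S \subset U -> delta * #|U|%:R <= #|S|%:R ->
    expect mu (fun s => tv (sfrac s S) (sfrac s U)) < delta.

Definition is_partition n m (V : 'I_m -> {set 'I_n}) : Prop :=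
  (forall i, V i != set0) /\
  (forall i j, i != j -> [disjoint V i & V j]) /\
  (\bigcup_(i < m) V i = [set: 'I_n]).

Definition regular_wrt n m (mu : config n -> R) (delta : R)
  (V : 'I_m -> {set 'I_n}) : Prop :=
  exists J : {set 'I_m},
    \sum_(i < m | i \notin J) #|V i|%:R < delta * n%:R /\
    forall i, i \in J -> regular_on mu delta (V i).

Definition joint n k (mu : config n -> R) (x : {ffun 'I_k -> 'I_n})
  (t : {ffun 'I_k -> Omega}) : R :=
  \sum_(s : config n | [forall j, s (x j) == t j]) mu s.

Definition marg n (mu : config n -> R) (y : 'I_n) (w : Omega) : R :=
  \sum_(s : config n | s y == w) mu s.

Definition prod_marg n k (mu : config n -> R) (x : {ffun 'I_k -> 'I_n})
  (t : {ffun 'I_k -> Omega}) : R :=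
  \prod_(j < k) marg mu (x j) (t j).

Definition eps_k_symmetric n (mu : config n -> R) (eps : R) (k : nat) : Prop :=
  (n%:R ^+ k)^-1 *
    \sum_(x : {ffun 'I_k -> 'I_n}) tv (joint mu x) (prod_marg mu x) < eps.

End Defs.

Arguments sfrac {R Omega n}.
Arguments tv {R T}.
Arguments expect {R T}.
Arguments is_prob {R T}.

(* Main.v *)
Require Import Defs.
From HB Require Import structures.
From mathcomp Require Import all_boot all_order all_algebra.
From mathcomp Require Import reals.
From mathcomp Require Import ring lra.
Set Implicit Arguments. Unset Strict Implicit. Unset Printing Implicit Defensive.
Import Order.TTheory GRing.Theory Num.Theory.
Local Open Scope ring_scope.



Section Aux.
Variables (R : realType) (Omega : finType) (n : nat) (mu : config Omega n -> R).
Hypothesis hmu : is_prob mu.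

Lemma sfrac_ge0 (s : config Omega n) S w : 0 <= sfrac s S w :> R.
Proof. by rewrite /sfrac divr_ge0. Qed.

Lemma sfrac_le1 (s : config Omega n) S w : sfrac s S w <= 1 :> R.
Proof.
rewrite /sfrac; have [->|hS] := eqVneq #|S| 0%N; first by rewrite invr0 mulr0.
rewrite ler_pdivrMr ?ltr0n ?lt0n // mul1r ler_nat.
by apply: subset_leq_card; apply/subsetP => x; rewrite inE => /andP[].
Qed.

Lemma expect_ge0 X : (forall s, 0 <= X s) -> 0 <= expect mu X.
Proof. by move=> hX; apply: sumr_ge0 => s _; rewrite mulr_ge0 //; case: hmu. Qed.

Lemma expect_le X : (forall s, X s <= 1) -> expect mu X <= 1.
Proof.
move=> hX; case: hmu => h0 h1; rewrite -h1 /expect; apply: ler_sum => s _.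
by rewrite -[leRHS]mulr1 ler_wpM2l.
Qed.

Lemma expect_norm X : `|expect mu X| <= expect mu (fun s => `|X s|).
Proof.
rewrite /expect; apply: le_trans (ler_norm_sum _ _ _) _; apply: ler_sum => s _.
by rewrite normrM ger0_norm //; case: hmu.
Qed.

Lemma expectD X Y : expect mu (fun s => X s + Y s) = expect mu X + expect mu Y.
Proof. by rewrite /expect -big_split; apply: eq_bigr => s _; rewrite mulrDr. Qed.

Lemma expectZ c X : expect mu (fun s => c * X s) = c * expect mu X.
Proof. by rewrite /expect mulr_sumr; apply: eq_bigr => s _; rewrite mulrCA. Qed.

Lemma expect_le_mono X Y : (forall s, X s <= Y s) -> expect mu X <= expect mu Y.
Proof. by move=> h; apply: ler_sum => s _; rewrite ler_wpM2l //; case: hmu. Qed.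

Lemma expect1 : expect mu (fun _ => 1) = 1.
Proof. by case: hmu => _ h; rewrite /expect -[RHS]h; apply: eq_bigr => s _; rewrite mulr1. Qed.

Lemma tv_pt (T : finType) (p q : T -> R) t : `|p t - q t| <= 2 * tv p q.
Proof.
rewrite /tv mulrA mulfV ?pnatr_eq0 // mul1r (bigD1 t) //= lerDl.
by apply: sumr_ge0 => ? _.
Qed.

Lemma tv_ge0 (T : finType) (p q : T -> R) : 0 <= tv p q.
Proof. by rewrite /tv mulr_ge0 // ?invr_ge0 // sumr_ge0. Qed.

End Aux.



Section Aux2.
Variables (R : realType) (Omega : finType) (n : nat) (mu : config Omega n -> R).
Hypothesis hmu : is_prob mu.

Lemma eq_expect X Y : (forall s, X s = Y s) -> expect mu X = expect mu Y.
Proof. by move=> h; apply: eq_bigr => s _; rewrite h. Qed.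

Definition Dv (g : config Omega n -> R) (v : 'I_n) (t : Omega) (q : R) :=
  expect mu (fun s => g s * (s v == t)%:R) - expect mu g * q.

Lemma count_sfrac (s : config Omega n) (S : {set 'I_n}) t :
  \sum_(x in S) ((s x == t)%:R : R) = #|S|%:R * sfrac s S t.
Proof.
rewrite /sfrac; have [->|hS] := eqVneq S set0.
  by rewrite big_set0 cards0 mul0r.
rewrite mulrC divfK ?pnatr_eq0 ?cards_eq0 //.
rewrite (_ : \sum_(x in S) _ = \sum_(x in S | s x == t) (1:R)); last first.
  by rewrite big_mkcondr; apply: eq_bigr => x _; case: (s x == t).
rewrite sumr_const; congr (_ %:R).
by apply: eq_card => x; rewrite !inE.
Qed.

Lemma Dsum (S : {set 'I_n}) g t q : \sum_(x in S) Dv g x t q =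
   #|S|%:R * expect mu (fun s => g s * (sfrac s S t - q)).
Proof.
rewrite /Dv big_split /= sumrN sumr_const.
have -> : \sum_(x in S) expect mu (fun s => g s * (s x == t)%:R) =
   expect mu (fun s => g s * (#|S|%:R * sfrac s S t)).
  rewrite /expect exchange_big /=; apply: eq_bigr => s _.
  by rewrite -count_sfrac !mulr_sumr.
rewrite -expectZ.
rewrite [RHS](eq_expect (Y := fun s => g s * (#|S|%:R * sfrac s S t) + (- (#|S|%:R * q)) * g s)); last by move=> s; ring.
rewrite expectD expectZ -mulr_natr. ring.
Qed.

Lemma Dv_norm g x t q : (forall s, 0 <= g s <= 1) -> 0 <= q <= 1 ->
  `|Dv g x t q| <= 1.
Proof.
move=> hg /andP[q0 q1].
have a0 : 0 <= expect mu (fun s => g s * (s x == t)%:R).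
  by apply: expect_ge0 => // s; case/andP: (hg s) => g0 _; rewrite mulr_ge0.
have a1 : expect mu (fun s => g s * (s x == t)%:R) <= 1.
  apply: expect_le => // s; case/andP: (hg s) => g0 g1.
  by rewrite mulr_ile1 // ?ler0n // lern1 leq_b1.
have b0 : 0 <= expect mu g by apply: expect_ge0 => // s; case/andP: (hg s).
have b1 : expect mu g <= 1 by apply: expect_le => // s; case/andP: (hg s).
have c0 : 0 <= expect mu g * q by rewrite mulr_ge0.
have c1 : expect mu g * q <= 1 by rewrite mulr_ile1.
rewrite /Dv ler_norml; apply/andP; split; lra.
Qed.

Lemma block_sub (delta c : R) (U S : {set 'I_n}) (qq : Omega -> R) g t :
  0 < delta -> 0 <= c -> regular_on mu delta U -> (forall w, 0 <= qq w <= 1) ->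
  (forall s, 0 <= g s <= 1) ->
  expect mu (fun s => tv (sfrac s U) qq) <= c -> S \subset U ->
  `|\sum_(x in S) Dv g x t (qq t)| <= (3 * delta + 2 * c) * #|U|%:R.
Proof.
move=> d0 c0 hreg hq hg he sSU.
have SU : (#|S|%:R <= #|U|%:R :> R) by rewrite ler_nat subset_leq_card.
have [big|small] := lerP (delta * #|U|%:R) #|S|%:R.
  rewrite Dsum normrM ger0_norm ?ler0n //.
  have h1 := hreg S sSU big.
  have h2 : `|expect mu (fun s => g s * (sfrac s S t - qq t))| <= 2 * delta + 2 * c.
    apply: le_trans (expect_norm _ _) _ => //.
    apply: (@le_trans _ _ (expect mu (fun s => 2 * tv (sfrac s S) (sfrac s U) +
                                              2 * tv (sfrac s U) qq))) _.
      apply: expect_le_mono => // s; rewrite normrM.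
      case/andP: (hg s) => g0 g1; rewrite (ger0_norm g0).
      apply: (@le_trans _ _ (`|sfrac s S t - qq t|)) _.
        by rewrite -[leRHS]mul1r ler_wpM2r.
      apply: (@le_trans _ _ (`|sfrac s S t - sfrac s U t| + `|sfrac s U t - qq t|)) _.
        by rewrite (_ : sfrac s S t - qq t = (sfrac s S t - sfrac s U t) + (sfrac s U t - qq t)) ?ler_normD //; ring.
      by rewrite lerD // tv_pt.
    rewrite expectD (expectZ _ 2 (fun s => tv (sfrac s S) (sfrac s U))) (expectZ _ 2 (fun s => tv (sfrac s U) qq)); lra.
  apply: (@le_trans _ _ (#|S|%:R * (2 * delta + 2 * c))) _.
    by rewrite ler_wpM2l ?ler0n.
  rewrite mulrC; apply: ler_pM => //; first by lra.
  lra.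
apply: le_trans (ler_norm_sum _ _ _) _.
apply: (@le_trans _ _ (\sum_(x in S) (1 : R))) _.
  apply: ler_sum => x _; apply: Dv_norm => //.
rewrite sumr_const -[_ *+ _]mulr_natr mul1r.
have : 0 <= c * #|U|%:R by rewrite mulr_ge0 ?ler0n.
have : 0 <= delta * #|U|%:R by rewrite mulr_ge0 ?ler0n // ltW.
rewrite mulrDl -!mulrA; lra.
Qed.


Lemma block_bound (delta c : R) (U : {set 'I_n}) (qq : Omega -> R) g t :
  0 < delta -> 0 <= c -> regular_on mu delta U -> (forall w, 0 <= qq w <= 1) ->
  (forall s, 0 <= g s <= 1) ->
  expect mu (fun s => tv (sfrac s U) qq) <= c ->
  \sum_(x in U) `|Dv g x t (qq t)| <= 2 * ((3 * delta + 2 * c) * #|U|%:R).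
Proof.
move=> d0 c0 hreg hq hg he.
pose F x := Dv g x t (qq t).
rewrite (bigID (fun x => 0 <= F x)) /=.
have e1 : \sum_(x in U | 0 <= F x) `|F x| =
          `|\sum_(x in [set x in U | 0 <= F x]) F x|.
  rewrite ger0_norm; last by apply: sumr_ge0 => x; rewrite inE => /andP[].
  apply: eq_big => [x|x /andP[_ hx]]; first by rewrite inE.
  by rewrite ger0_norm.
have e2 : \sum_(x in U | ~~ (0 <= F x)) `|F x| =
          `|\sum_(x in [set x in U | ~~ (0 <= F x)]) F x|.
  rewrite ler0_norm; last first.
    by apply: sumr_le0 => x; rewrite inE => /andP[_]; rewrite -ltNge => /ltW.
  rewrite -sumrN; apply: eq_big => [x|x /andP[_ hx]]; first by rewrite inE.
  by rewrite ler0_norm // ltW // ltNge.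
rewrite e1 e2 mulr_natl mulr2n.
by apply: lerD; apply: (block_sub (c:=c)) => //; apply/subsetP => x; rewrite inE => /andP[].
Qed.


Definition mb m (V : 'I_m -> {set 'I_n}) i w := expect mu (fun s => sfrac s (V i) w).

Lemma mb_bnd m (V : 'I_m -> {set 'I_n}) i w : 0 <= mb V i w <= 1.
Proof.
by rewrite /mb expect_ge0 ?expect_le // => s; rewrite ?sfrac_ge0 ?sfrac_le1.
Qed.

Lemma part_sum m (V : 'I_m -> {set 'I_n}) (part : 'I_n -> 'I_m)
   (F : 'I_m -> 'I_n -> R) :
  (forall v i, (v \in V i) = (part v == i)) ->
  \sum_(v : 'I_n) F (part v) v = \sum_(i < m) \sum_(v in V i) F i v.
Proof.
move=> hp; rewrite (partition_big part predT) //=.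
apply: eq_bigr => i _; apply: eq_big => v; first by rewrite hp.
by move=> /eqP ->.
Qed.

Lemma total_bound m (V : 'I_m -> {set 'I_n}) (part : 'I_n -> 'I_m)
   (J : {set 'I_m}) (delta c : R) g t :
  (0 < n)%N ->
  (forall v i, (v \in V i) = (part v == i)) ->
  0 < delta -> 0 < c -> delta <= c -> delta <= c * c ->
  \sum_(i < m | i \notin J) #|V i|%:R < delta * n%:R ->
  (forall i, i \in J -> regular_on mu delta (V i)) ->
  \sum_(i < m) (#|V i|%:R / n%:R) *
     expect mu (fun s => tv (sfrac s (V i)) (mb V i)) < delta ->
  (forall s, 0 <= g s <= 1) ->
  \sum_(v : 'I_n) `|Dv g v t (mb V (part v) t)| <= 12 * c * n%:R.
Proof.
move=> n0 hp d0 c0 dc dcc hJ hreg hsum hg.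
pose e i := expect mu (fun s => tv (sfrac s (V i)) (mb V i)).
have e0 i : 0 <= e i by apply: expect_ge0 => // s; apply: tv_ge0.
have cardV : \sum_(i < m) (#|V i|%:R : R) = n%:R.
  rewrite -[in RHS](card_ord n) -sum1_card natr_sum.
  rewrite (part_sum (fun i v => 1%:R) hp); apply: eq_bigr => i _.
  by rewrite -sum1_card natr_sum.
rewrite (part_sum (fun i v => `|Dv g v t (mb V i t)|) hp).
apply: (@le_trans _ _ (\sum_(i < m) (2 * ((3 * delta + 2 * c) * #|V i|%:R)
     + (i \notin J)%:R * #|V i|%:R + (e i / c) * #|V i|%:R))).
  apply: ler_sum => i _.
  have V0 : 0 <= (#|V i|%:R : R) by rewrite ler0n.
  have x1 : 0 <= (i \notin J)%:R * (#|V i|%:R : R) by rewrite mulr_ge0 ?ler0n.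
  have x2 : 0 <= e i / c * #|V i|%:R by rewrite !mulr_ge0 // ?invr_ge0 ltW.
  have x0 : 0 <= 2 * ((3 * delta + 2 * c) * #|V i|%:R).
    by rewrite !mulr_ge0 //; lra.
  have triv : \sum_(v in V i) `|Dv g v t (mb V i t)| <= #|V i|%:R.
    apply: (@le_trans _ _ (\sum_(v in V i) 1)).
      by apply: ler_sum => v _; apply: Dv_norm => //; apply: mb_bnd.
    by rewrite sumr_const.
  case: (boolP (i \in J)) => iJ /=; last first.
    rewrite mul1r; lra.
  have [eic|eic] := lerP (e i) c.
    have h := block_bound t d0 (ltW c0) (hreg i iJ) (mb_bnd V i) hg eic.
    lra.
  have : #|V i|%:R <= e i / c * #|V i|%:R.
    by rewrite -[X in X <= _]mul1r ler_wpM2r // ler_pdivlMr // mul1r ltW.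
  lra.
rewrite !big_split /= -!mulr_sumr cardV.
have h1 : \sum_(i < m) (i \notin J)%:R * (#|V i|%:R : R) < delta * n%:R.
  apply: le_lt_trans hJ; rewrite le_eqVlt; apply/orP; left; apply/eqP.
  rewrite [RHS]big_mkcond; apply: eq_bigr => i _.
  by case: (i \notin J); rewrite ?mul1r ?mul0r.
have h2 : \sum_(i < m) e i / c * (#|V i|%:R : R) <= c * n%:R.
  have n0' : 0 < (n%:R : R) by rewrite ltr0n.
  have -> : \sum_(i < m) e i / c * (#|V i|%:R : R) =
            (n%:R / c) * \sum_(i < m) (#|V i|%:R / n%:R) * e i.
    rewrite mulr_sumr; apply: eq_bigr => i _.
    by field; rewrite pnatr_eq0 -lt0n n0 /= gt_eqF.
  apply: (@le_trans _ _ (n%:R / c * delta)).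
    by apply: ler_wpM2l; [rewrite divr_ge0 ?ler0n ?ltW | apply: ltW].
  rewrite (_ : n%:R / c * delta = (delta / c) * n%:R); last by field; rewrite gt_eqF.
  by rewrite ler_wpM2r ?ler0n // ler_pdivrMr.
have : 0 <= c * n%:R by rewrite mulr_ge0 ?ler0n ?ltW.
have : delta * n%:R <= c * n%:R by rewrite ler_wpM2r ?ler0n.
rewrite (_ : 2 * ((3 * delta + 2 * c) * n%:R) = 6 * (delta * n%:R) + 4 * (c * n%:R)); last by ring.
rewrite (_ : 12 * c * n%:R = 12 * (c * n%:R)); last by ring.
lra.
Qed.

End Aux2.



Section Upd.
Variables (k : nat) (T : finType).
Definition upd (x : {ffun 'I_k -> T}) (j : 'I_k) (a : T) : {ffun 'I_k -> T} :=
  [ffun l => if l == j then a else x l].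

Lemma upd_j x j a : upd x j a j = a.
Proof. by rewrite ffunE eqxx. Qed.
Lemma upd_upd x j a b : upd (upd x j a) j b = upd x j b.
Proof. by apply/ffunP => l; rewrite !ffunE; case: (l == j). Qed.
Lemma upd_id x j : upd x j (x j) = x.
Proof. by apply/ffunP => l; rewrite !ffunE; case: eqP => // ->. Qed.
Lemma upd_eq x j a : (upd x j a == x) = (x j == a).
Proof.
apply/eqP/eqP => [<-|<-]; first by rewrite upd_j.
exact: upd_id.
Qed.
Lemma upd_ne x j a l : l != j -> upd x j a l = x l.
Proof. by rewrite ffunE => /negbTE ->. Qed.
End Upd.

Section Avg.
Variables (R : realType).

Lemma ffun_avg k n (F : {ffun 'I_k -> 'I_n} -> R) (j : 'I_k) (B : R) :
  (forall x, \sum_(v < n) F (upd x j v) <= B) ->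
  n%:R * \sum_x F x <= (n ^ k)%:R * B.
Proof.
move=> hB.
have claim v w : \sum_(x : {ffun 'I_k -> 'I_n} | x j == w) F (upd x j v) = \sum_(x : {ffun 'I_k -> 'I_n} | x j == v) F x.
  rewrite (reindex_onto (fun y => upd y j w) (fun x => upd x j v)); last first.
    by move=> x /eqP <-; rewrite upd_upd upd_id.
  apply: eq_big => [y|y].
    by rewrite upd_j eqxx upd_upd upd_eq.
  by case/andP => _; rewrite upd_upd => /eqP ->.
have E : n%:R * \sum_x F x = \sum_x \sum_(v < n) F (upd x j v).
  rewrite exchange_big /=.
  transitivity (\sum_(v < n) n%:R * \sum_(x : {ffun 'I_k -> 'I_n} | x j == v) F x).
    rewrite -mulr_sumr; congr (_ * _).
    by rewrite (partition_big (fun x : {ffun 'I_k -> 'I_n} => x j) xpredT).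
  apply: eq_bigr => v _.
  rewrite [RHS](partition_big (fun x : {ffun 'I_k -> 'I_n} => x j) xpredT) //=.
  under [RHS]eq_bigr => w _ do rewrite (claim v w).
  by rewrite sumr_const card_ord mulr_natl.
rewrite E.
apply: (@le_trans _ _ (\sum_(x : {ffun 'I_k -> 'I_n}) B)).
  by apply: ler_sum => x _.
by rewrite sumr_const card_ffun !card_ord mulr_natl.
Qed.
End Avg.



Section Prod.
Variable R : realType.

Lemma prod_diff k (f g : 'I_k -> R) :
  (forall l, 0 <= f l <= 1) -> (forall l, 0 <= g l <= 1) ->
  `|\prod_l f l - \prod_l g l| <= \sum_l `|f l - g l|.
Proof.
elim: k f g => [|k IH] f g hf hg.
  by rewrite !big_ord0 subrr normr0.
rewrite !big_ord_recr /=.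
set P := \prod_(i < k) f (widen_ord _ i).
set Q := \prod_(i < k) g (widen_ord _ i).
have hPQ : `|P - Q| <= \sum_(i < k) `|f (widen_ord (leqnSn k) i) - g (widen_ord (leqnSn k) i)|.
  by apply: IH => l.
have Q0 : 0 <= Q by apply: prodr_ge0 => i _; case/andP: (hg (widen_ord (leqnSn k) i)).
have Q1 : Q <= 1 by apply: prodr_ile1 => i _; apply: hg.
case/andP: (hf ord_max) => a0 a1; case/andP: (hg ord_max) => b0 b1.
rewrite (_ : P * f ord_max - Q * g ord_max =
   (P - Q) * f ord_max + Q * (f ord_max - g ord_max)); last by ring.
apply: le_trans (ler_normD _ _) _.
apply: lerD.
  rewrite normrM (ger0_norm a0); apply: le_trans hPQ.
  by rewrite -[leRHS]mulr1 ler_wpM2l.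
rewrite normrM (ger0_norm Q0) -[leRHS]mul1r ler_wpM2r //.
Qed.
End Prod.

Section Tel.
Variables (R : realType) (Omega : finType) (n : nat) (mu : config Omega n -> R).
Hypothesis hmu : is_prob mu.
Variables (k : nat) (mbv : 'I_n -> Omega -> R).
Hypothesis hmb : forall v w, 0 <= mbv v w <= 1.

Definition indj (x : {ffun 'I_k -> 'I_n}) (t : {ffun 'I_k -> Omega}) (j : nat)
  : config Omega n -> R :=
  fun s => ([forall l : 'I_k, (l < j)%N ==> (s (x l) == t l)])%:R.

Lemma indj_bnd x t j s : 0 <= indj x t j s <= 1.
Proof. by rewrite /indj; case: [forall _, _]; rewrite ?lexx ?ler01. Qed.

Lemma joint_tel x t :
  `|joint mu x t - \prod_l mbv (x l) (t l)| <=
  \sum_(j < k) `|Dv mu (indj x t j) (x j) (t j) (mbv (x j) (t j))|.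
Proof.
pose a (j : nat) := expect mu (indj x t j) *
   \prod_(l < k | (j <= l)%N) mbv (x l) (t l).
have a0 : a 0%N = \prod_l mbv (x l) (t l).
  rewrite /a (@eq_expect _ _ _ mu _ (fun _ => 1)); last first.
    by move=> s; rewrite /indj (_ : [forall _, _] = true) //; apply/forallP.
  by rewrite (expect1 hmu) mul1r.
have ak : a k = joint mu x t.
  rewrite /a big_pred0; last by move=> l; rewrite leqNgt ltn_ord.
  rewrite mulr1 /joint /expect [RHS]big_mkcond /=; apply: eq_bigr => s _.
  rewrite /indj (_ : [forall l : 'I_k, (l < k)%N ==> (s (x l) == t l)] =
                     [forall j, s (x j) == t j]).
    by case: [forall _, _]; rewrite ?mulr1 ?mulr0.
  by apply: eq_forallb => l; rewrite ltn_ord.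
have step (j : 'I_k) : a j.+1 - a j =
   Dv mu (indj x t j) (x j) (t j) (mbv (x j) (t j)) *
   \prod_(l < k | (j.+1 <= l)%N) mbv (x l) (t l).
  rewrite /a [in X in _ - X](bigD1 j) //=.
  have -> : \prod_(i < k | (j <= i)%N && (i != j)) mbv (x i) (t i) =
            \prod_(i < k | (j < i)%N) mbv (x i) (t i).
    by apply: eq_bigl => l; rewrite ltn_neqAle andbC eq_sym.
  rewrite (@eq_expect _ _ _ mu _ (fun s => indj x t j s * (s (x j) == t j)%:R)); last first.
    move=> s; rewrite /indj.
    rewrite (_ : [forall l : 'I_k, (l < j.+1)%N ==> (s (x l) == t l)] =
       [forall l : 'I_k, (l < j)%N ==> (s (x l) == t l)] && (s (x j) == t j)).
      by case: [forall _, _]; case: (s (x j) == t j); rewrite ?mulr1 ?mulr0.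
    apply/forallP/andP => [h|[/forallP h1 h2] l].
      split; last by move: (h j); rewrite ltnSn.
      by apply/forallP => l; apply/implyP => hl; move/implyP: (h l); apply; rewrite ltnS ltnW.
    apply/implyP; rewrite ltnS leq_eqVlt => /orP[/eqP hl|hl].
      by rewrite (_ : l = j) //; apply: val_inj.
    by move/implyP: (h1 l); apply.
  rewrite /Dv; ring.
have tel : a k - a 0%N = \sum_(j < k) (a j.+1 - a j).
  by rewrite -(telescope_sumr _ (leq0n k)) big_mkord.
rewrite -a0 -ak tel.
apply: le_trans (ler_norm_sum _ _ _) _; apply: ler_sum => j _.
rewrite step normrM -[leRHS]mulr1 ler_wpM2l //.
rewrite ger0_norm; first by apply: prodr_ile1 => l _; apply: hmb.
by apply: prodr_ge0 => l _; case/andP: (hmb (x l) (t l)).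
Qed.
End Tel.



Section Fin.
Variables (R : realType) (Omega : finType) (n : nat) (mu : config Omega n -> R).
Hypothesis hmu : is_prob mu.
Variables (k : nat) (mbv : 'I_n -> Omega -> R) (beta : R).
Hypothesis hmb : forall v w, 0 <= mbv v w <= 1.
Hypothesis hbound : forall g w, (forall s, 0 <= g s <= 1) ->
  \sum_(v : 'I_n) `|Dv mu g v w (mbv v w)| <= beta * n%:R.

Lemma Dv_ext g1 g2 v t q : (forall s, g1 s = g2 s) -> Dv mu g1 v t q = Dv mu g2 v t q.
Proof.
move=> h; rewrite /Dv (@eq_expect _ _ _ mu g1 g2) //.
by rewrite (@eq_expect _ _ _ mu _ (fun s => g2 s * (s v == t)%:R)) // => s; rewrite h.
Qed.

Lemma marg_Dv y w q : marg mu y w - q = Dv mu (fun _ => 1) y w q.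
Proof.
rewrite /Dv (expect1 hmu) mul1r /marg /expect big_mkcond /=.
congr (_ - _); apply: eq_bigr => s _; rewrite mul1r.
by case: (s y == w); rewrite ?mulr1 ?mulr0.
Qed.

Lemma marg_bnd y w : 0 <= marg mu y w <= 1.
Proof.
have := marg_Dv y w 0; rewrite subr0 /Dv mulr0 subr0 => ->.
rewrite expect_ge0 ?expect_le // => s; rewrite mul1r ?ler0n //.
by case: (s y == w); rewrite ?lexx ?ler01.
Qed.

Lemma indj_upd (x : {ffun 'I_k -> 'I_n}) (t : {ffun 'I_k -> Omega}) (j : 'I_k) v (s : config Omega n) :
  indj R x t j s = indj R (upd x j v) t j s.
Proof.
rewrite /indj; congr ((nat_of_bool _)%:R); apply: eq_forallb => l.
case: (ltnP l j) => //= hl.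
by rewrite upd_ne // neq_ltn hl.
Qed.

Lemma sum_F (F : {ffun 'I_k -> 'I_n} -> R) (j : 'I_k) :
  (0 < n)%N -> (forall x, \sum_(v < n) F (upd x j v) <= beta * n%:R) ->
  \sum_x F x <= beta * (n ^ k)%:R.
Proof.
move=> n0 h; have := ffun_avg h.
have n0' : 0 < (n%:R : R) by rewrite ltr0n.
move=> H; rewrite -(ler_pM2l n0'); apply: le_trans H _.
by rewrite le_eqVlt; apply/orP; left; apply/eqP; ring.
Qed.

Lemma sum_tv_bound : (0 < n)%N ->
  \sum_(x : {ffun 'I_k -> 'I_n}) tv (joint mu x) (prod_marg mu x) <=
  #|{ffun 'I_k -> Omega}|%:R * k%:R * beta * (n ^ k)%:R.
Proof.
move=> n0.
pose F1 (t : {ffun 'I_k -> Omega}) (j : 'I_k) (x : {ffun 'I_k -> 'I_n}) :=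
  `|Dv mu (indj R x t j) (x j) (t j) (mbv (x j) (t j))|.
pose F2 (t : {ffun 'I_k -> Omega}) (j : 'I_k) (x : {ffun 'I_k -> 'I_n}) :=
  `|Dv mu (fun _ => 1) (x j) (t j) (mbv (x j) (t j))|.
have pt x : tv (joint mu x) (prod_marg mu x) <=
   2^-1 * \sum_t \sum_(j < k) (F1 t j x + F2 t j x).
  rewrite /tv ler_wpM2l ?invr_ge0 ?ler0n //.
  apply: ler_sum => t _; rewrite big_split /=.
  apply: (@le_trans _ _ (`|joint mu x t - \prod_l mbv (x l) (t l)| +
                        `|\prod_l mbv (x l) (t l) - prod_marg mu x t|)) _.
    rewrite (_ : joint mu x t - prod_marg mu x t =
      (joint mu x t - \prod_l mbv (x l) (t l)) +
      (\prod_l mbv (x l) (t l) - prod_marg mu x t)); first exact: ler_normD.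
    ring.
  apply: lerD; first exact: joint_tel.
  rewrite distrC /prod_marg.
  apply: le_trans (prod_diff _ _) _ => [l|l|]; first exact: marg_bnd.
    exact: hmb.
  by apply: ler_sum => j _; rewrite marg_Dv.
apply: le_trans (ler_sum _ (fun x _ => pt x)) _.
rewrite -mulr_sumr exchange_big /=.
apply: (@le_trans _ _ (2^-1 * \sum_(t : {ffun 'I_k -> Omega}) \sum_(j < k)
          (beta * (n ^ k)%:R + beta * (n ^ k)%:R))).
  rewrite ler_wpM2l ?invr_ge0 ?ler0n //.
  apply: ler_sum => t _; rewrite exchange_big /=; apply: ler_sum => j _.
  rewrite big_split /=; apply: lerD.
    apply: (@sum_F (F1 t j) j n0) => x.
    have -> : \sum_(v < n) F1 t j (upd x j v) =
      \sum_(v < n) `|Dv mu (indj R x t j) v (t j) (mbv v (t j))|.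
      apply: eq_bigr => v _.
      rewrite /F1 upd_j; congr (`| _ |); apply: Dv_ext => s.
      by rewrite -indj_upd.
    by apply: hbound; apply: indj_bnd.
  apply: (@sum_F (F2 t j) j n0) => x.
  have h1 : forall s : config Omega n, 0 <= (fun _ => 1 : R) s <= 1 by move=> s; rewrite ler01 lexx.
  have -> : \sum_(v < n) F2 t j (upd x j v) =
      \sum_(v < n) `|Dv mu (fun _ => 1) v (t j) (mbv v (t j))|.
    by apply: eq_bigr => v _; rewrite /F2 upd_j.
  exact: (hbound (t j) h1).
rewrite !sumr_const card_ord -[_ *+ k]mulr_natl -[_ *+ #|_|]mulr_natl.
rewrite (_ : beta * (n ^ k)%:R + beta * (n ^ k)%:R = 2 * (beta * (n ^ k)%:R)); last by ring.
rewrite le_eqVlt; apply/orP; left; apply/eqP.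
by field.
Qed.

End Fin.


Unset Implicit Arguments. Set Strict Implicit. Set Printing Implicit Defensive.

Theorem lemma2p8 (R : realType) (Omega : finType) (k : nat) (eps : R) :
  (0 < #|Omega|)%N -> (2 <= k)%N -> 0 < eps ->
  exists delta : R, 0 < delta /\
  exists N : nat, forall n : nat, (N <= n)%N ->
  forall (mu : config Omega n -> R) (m : nat) (V : 'I_m -> {set 'I_n}),
    is_prob mu ->
    is_partition V ->
    regular_wrt mu delta V ->
    let mubar := fun (i : 'I_m) (w : Omega) =>
      expect mu (fun s => sfrac s (V i) w) in
    \sum_(i < m) (#|V i|%:R / n%:R) *
       expect mu (fun s => tv (sfrac s (V i)) (mubar i)) < delta ->
    eps_k_symmetric mu eps k.
Proof.
move=> hO hk he.
pose M : R := #|{ffun 'I_k -> Omega}|%:R.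
have M0 : 0 < M by rewrite /M ltr0n card_ffun card_ord expn_gt0 hO.
have k0 : 0 < (k%:R : R) by rewrite ltr0n; apply: leq_trans hk.
pose c := eps / (24 * M * k%:R).
have c0 : 0 < c by rewrite /c divr_gt0 // !mulr_gt0.
have c0w : 0 <= c := ltW c0.
pose delta := c * c / (1 + c).
have c1 : 0 < 1 + c by lra.
have d0 : 0 < delta by rewrite /delta divr_gt0 // mulr_gt0.
have dcc : delta <= c * c.
  rewrite /delta ler_pdivrMr // mulrDr mulr1.
  have : 0 <= c * c * c by apply: mulr_ge0 => //; apply: mulr_ge0.
  lra.
have dc : delta <= c.
  rewrite /delta ler_pdivrMr // mulrDr mulr1; have : 0 <= c * c by apply: mulr_ge0.
  lra.
exists delta; split => //.
exists 1%N => n hn mu m V hmu hpart [J [hJ hreg]] mubar hsum.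
case: hpart => hne [hdisj hcov].
have hin v : exists i, v \in V i.
  have : v \in [set: 'I_n] by rewrite inE.
  by rewrite -hcov => /bigcupP[i _ vi]; exists i.
have [i0 _] := hin (Ordinal hn).
pose part v := odflt i0 [pick i | v \in V i].
have hpv v : v \in V (part v).
  rewrite /part; case: pickP => [i //|h].
  by have [i vi] := hin v; rewrite h in vi.
have hp v i : (v \in V i) = (part v == i).
  apply/idP/eqP => [vi|<-//]; apply/eqP; apply/negP => /negP ne.
  have := hdisj _ _ ne; move/disjointFr => /(_ _ (hpv v)); by rewrite vi.
pose mbv v w := mb mu V (part v) w.
have hmb v w : 0 <= mbv v w <= 1 by apply: mb_bnd.
have hbound : forall g w, (forall s, 0 <= g s <= 1) ->
   \sum_(v : 'I_n) `|Dv mu g v w (mbv v w)| <= (12 * c) * n%:R.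
  move=> g w hg.
  by apply: (total_bound hmu w hn hp d0 c0 dc dcc hJ hreg hsum hg).
have key := sum_tv_bound hmu k hmb hbound hn.
rewrite /eps_k_symmetric.
have nk : 0 < (n%:R ^+ k : R) by rewrite exprn_gt0 // ltr0n.
rewrite -natrX in nk *.
rewrite mulrC ltr_pdivrMr //.
apply: le_lt_trans key _.
rewrite -/M (_ : M * k%:R * (12 * c) = eps / 2); last first.
  by rewrite /c; field; rewrite (gt_eqF k0) (gt_eqF M0).
have he2 : 0 < eps * (n ^ k)%:R by rewrite mulr_gt0.
rewrite (_ : eps / 2 * (n ^ k)%:R = (eps * (n ^ k)%:R) / 2); last by field.
lra.
Qed.
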